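(* Let $I\subseteq R$ be an $\mathfrak m$-primary monomial ideal with $\mu_i=x_i^{d_i}\in G(I)$ for $i=1,\dots,n$. If $I$ is good, then every minimal generator $x_1^{\alpha_1}\cdots x_n^{\alpha_n}\in G(I)$ satisfies $\frac{\alpha_1}{d_1}+\cdots+\frac{\alpha_n}{d_n}\ge 1$.
   Context: Let $\mathbb K$ be a field, $R=\mathbb K[x_1,\dots,x_n]$, $\mathfrak m=\langle x_1,\dots,x_n\rangle$, $\mathbb N=\{0,1,2,\dots\}$. A monomial $x_1^{\alpha_1}\cdots x_n^{\alpha_n}$ is identified with the point $(\alpha_1,\dots,\alpha_n)\in\mathbb N^n$. For a monomial ideal $I$, $G(I)$ denotes its (unique) minimal monomial generating set. If $I$ is an $\mathfrak m$-primary monomial ideal, then for each $i$ there is a unique $d_i\ge1$ with $x_i^{d_i}\in G(I)$; write $\mu_i=x_i^{d_i}$. For $(a_1,\dots,a_n)\in\mathbb N^n$ the box associated to $I$ is $B_{a_1,\dots,a_n}=([a_1d_1,(a_1+1)d_1]\times\cdots\times[a_nd_n,(a_n+1)d_n])\cap\mathbb N^n$; a monomial belongs to a box if its exponent vector does. $I$ is called good if for every integer $l\ge1$, every element of $G(I^l)$ belongs to some box $B_{a_1,\dots,a_n}$ with $a_1+\dots+a_n=l-1$; otherwise $I$ is called bad. *)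

(* Defs.v *)
(* Monomial ideals of K[x_1..x_n] are encoded by their sets of
   monomials, i.e. up-closed subsets of N^n (exponent vectors). *)
From HB Require Import structures.
From mathcomp Require Import all_boot all_order all_algebra.
Set Implicit Arguments. Unset Strict Implicit. Unset Printing Implicit Defensive.

(* exponent vectors in N^n, identified with monomials x^alpha *)
Definition mono (n : nat) := {ffun 'I_n -> nat}.

(* componentwise order: x^a divides x^b *)
Definition mle n (a b : mono n) : Prop := forall i, a i <= b i.

Definition mone n : mono n := [ffun => 0].

Definition xpow n (i : 'I_n) (k : nat) : mono n :=
  [ffun j => if j == i then k else 0].

Definition is_monomial_ideal n (I : mono n -> Prop) : Prop :=
  forall a b, I a -> mle a b -> I b.

(* membership in the minimal monomial generating set G(I) *)
Definition mingen n (I : mono n -> Prop) (a : mono n) : Prop :=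
  I a /\ forall b, I b -> mle b a -> b = a.

(* m-primary monomial ideal: proper (1 not in I) and some power of every
   variable lies in I (equivalently, sqrt I = m) *)
Definition m_primary n (I : mono n -> Prop) : Prop :=
  ~ I (mone n) /\ forall i, exists k, I (xpow i k).

(* product of l monomials (sum of exponent vectors) *)
Definition msum n l (f : 'I_l -> mono n) : mono n :=
  [ffun i => \sum_(j < l) f j i].

(* the monomials of I^l: multiples of products of l monomials of I *)
Definition mpow n (I : mono n -> Prop) (l : nat) (a : mono n) : Prop :=
  exists f : 'I_l -> mono n, (forall j, I (f j)) /\ mle (msum f) a.

Definition in_box n (d : 'I_n -> nat) (c : mono n) (g : mono n) : Prop :=
  forall i, c i * d i <= g i <= (c i).+1 * d i.

Definition good n (I : mono n -> Prop) (d : 'I_n -> nat) : Prop :=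
  forall l, 0 < l -> forall g, mingen (mpow I l) g ->
    exists c : mono n, \sum_(i < n) c i = l.-1 /\ in_box d c g.

(* Main.v *)
Require Import Defs.
From HB Require Import structures.
From mathcomp Require Import all_boot all_order all_algebra.
From Stdlib Require Import Classical.
From mathcomp Require Import lra.
Import Order.TTheory GRing.Theory Num.Theory.

Lemma sum_eq_mle n (b h : mono n) :
  mle b h -> \sum_(i < n) b i = \sum_(i < n) h i -> b = h.
Proof.
move=> bh e.
have L := @leqif_sum _ predT (fun i => b i == h i) (fun i => b i) (fun i => h i)
  (fun i _ => leqif_eq (bh i)).
move: (L) => [_ /esym]; rewrite e eqxx => /forallP H.
apply/ffunP => i; exact/eqP/(implyP (H i)).
Qed.

Arguments sum_eq_mle {n b h}.

Lemma exists_min n (P : mono n -> Prop) :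
  forall k h, P h -> \sum_(i < n) h i <= k ->
  exists h', P h' /\ mle h' h /\ (forall b, P b -> mle b h' -> b = h').
Proof.
elim=> [|k IH] h Ph hk.
  exists h; split=> //; split=> // b Pb bh; apply: sum_eq_mle => //.
  apply/eqP; rewrite eqn_leq; apply/andP; split; first by apply: leq_sum => i _; exact: bh.
  by apply: leq_trans hk _.
destruct (classic (forall b, P b -> mle b h -> b = h)) as [H|H].
  by exists h; split=> //; split.
case/not_all_ex_not: H => b Hb.
have [Pb Hb'] := imply_to_and _ _ Hb.
have [bh nbh] := imply_to_and _ _ Hb'.
have lt : \sum_(i < n) b i < \sum_(i < n) h i.
  rewrite ltn_neqAle (@leq_sum _ _ _ (fun i => b i) (fun i => h i) (fun i _ => bh i)) andbT; apply/eqP => e.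
  exact: (nbh (sum_eq_mle bh e)).
have [h' [P' [h'b M]]] : exists h', P h' /\ mle h' b /\ (forall b0, P b0 -> mle b0 h' -> b0 = h').
  by apply: IH Pb _; rewrite -ltnS; apply: leq_trans lt hk.
exists h'; split=> //; split=> // i; exact: leq_trans (h'b i) (bh i).
Qed.

Arguments exists_min {n} P k h.

Lemma msum_const n l (g : mono n) : msum (fun _ : 'I_l => g) = [ffun i => l * g i].
Proof. by apply/ffunP => i; rewrite !ffunE sum_nat_const card_ord. Qed.

Theorem mainTheorem2 (n : nat) (I : mono n -> Prop) (d : 'I_n -> nat) :
  is_monomial_ideal I -> m_primary I ->
  (forall i, mingen I (xpow i (d i))) ->
  good I d ->
  forall g, mingen I g ->
    (1 <= \sum_(i < n) ((g i)%:R / (d i)%:R) :> rat)%R.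
Proof.
move=> Hid [Hone _] Hx Hgood g [Ig _].
have dpos : forall i, 0 < d i.
  move=> i; rewrite lt0n; apply/negP => /eqP d0.
  have [H _] := Hx i; apply: Hone; rewrite d0 in H.
  suff -> : mone n = xpow i 0 by [].
  by apply/ffunP => j; rewrite !ffunE; case: (j == i).
set s := (\sum_(i < n) _)%R.
have key : forall l, 0 < l -> ((l.-1)%:R <= l%:R * s :> rat)%R.
  move=> l l0.
  have Pg : mpow I l [ffun i => l * g i].
    by exists (fun _ => g); split=> // i; rewrite msum_const.
  have [h [Ph [hle hmin]]] := exists_min (mpow I l) _ _ Pg (leqnn _).
  have [c [csum cbox]] := Hgood l l0 h (conj Ph hmin).
  rewrite -csum natr_sum /s mulr_sumr; apply: ler_sum => i _.
  have := cbox i => /andP [c1 _].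
  have := hle i; rewrite ffunE => h1.
  have cl : c i * d i <= l * g i by apply: leq_trans c1 h1.
  have dp : (0 < (d i)%:R :> rat)%R by rewrite ltr0n.
  rewrite mulrA ler_pdivlMr // -!natrM ler_nat.
  exact: cl.
rewrite leNgt; apply/negP => s1.
have t0 : (0 < 1 - s :> rat)%R by rewrite subr_gt0.
have b0 : (0 <= (1 - s)^-1 :> rat)%R by rewrite invr_ge0 ltW.
set m := Num.bound (1 - s)^-1.
have hb := archi_boundP b0; rewrite -/m in hb.
have H1 : (1 < m%:R * (1 - s) :> rat)%R.
  by rewrite -ltr_pdivrMr // mul1r.
have := key m.+1 isT; rewrite /= -natr1 => H2.
nra.
Qed.
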